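(* Assume the setup and monomial order in the context. The unique minimal (with respect to inclusion) subset of $X^*$ generating the monoid ideal $\mathrm{Tip}(I)$ of the free monoid $X^*$ is $$\{v_{j,n}v^\dagger_{1,r(i)}: v\in M,\ (j,i)\in[n]^2\}.$$ In particular $X\cap\mathrm{Tip}(I)=\emptyset$.
   Context: Let $k$ be a field and $n\ge 2$ an integer; write $[n]=\{1,\dots,n\}$ and $r(i)=n+1-i$. Let $X=\{u_{j,i},u^*_{j,i}:(j,i)\in[n]^2\}$ be a set of $2n^2$ distinct symbols and let $*$ be the involution of $X$ exchanging $u_{j,i}$ and $u^*_{j,i}$. Let $k\langle X\rangle$ be the free unital $k$-algebra on $X$, with $k$-basis the free monoid $X^*$ of monomials. For an $n\times n$ matrix $v=(v_{j,i})$ with entries in $X$ define $n\times n$ matrices $v^t,v^\star,v^\dagger$ with entries in $X$ by $v^t_{j,i}=v_{i,j}$, $v^\star_{j,i}=(v_{r(j),r(i)})^*$, $v^\dagger_{j,i}=(v_{r(i),r(j)})^*$. Let $u=(u_{j,i})$ and $M=\{u,u^t,u^\star,u^\dagger\}$. Let $I$ be the two-sided ideal generated by $R=\{\sum_{s=1}^n v_{j,r(s)}v^\dagger_{s,r(i)}-\delta_{j,i}1: v\in M,(j,i)\in[n]^2\}$. Monomial order: let $\le$ be the total order on $X$ with $u^*_{t,s}<u_{j,i}$ for all indices, $u_{t,s}<u_{j,i}$ iff $(t,s)<(j,i)$ lexicographically, and $u^*_{t,s}<u^*_{j,i}$ iff $(j,i)<(t,s)$ lexicographically; extend it degree-lexicographically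 to $X^*$. For $0\ne p\in k\langle X\rangle$, $\mathrm{tip}(p)$ is the $\le$-largest monomial with nonzero coefficient in $p$; $\mathrm{Tip}(I)=\{\mathrm{tip}(p):0\ne p\in I\}$, a monoid ideal (closed under multiplication by monomials on both sides). *)

(* Defs.v *)
From mathcomp Require Import all_boot all_order all_algebra.
Set Implicit Arguments. Unset Strict Implicit. Unset Printing Implicit Defensive.
Import GRing.Theory.
Local Open Scope ring_scope.

(* Indices [n] = {1..n} are represented 0-based by 'I_n; r(i) = n+1-i becomes
   rev_ord i (value n-1-i).  A symbol of X is (b, j, i): b = false is u_{j,i},
   b = true is u^*_{j,i}. *)
Definition sym (n : nat) := (bool * 'I_n * 'I_n)%type.

Definition ustar n (x : sym n) : sym n := let '(b, j, i) := x in (~~ b, j, i).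

Definition smat n := 'I_n -> 'I_n -> sym n.
Definition umat n : smat n := fun j i => (false, j, i).
Arguments umat : clear implicits.
Definition mtr n (v : smat n) : smat n := fun j i => v i j.
Definition mstar n (v : smat n) : smat n :=
  fun j i => ustar (v (rev_ord j) (rev_ord i)).
Definition mdag n (v : smat n) : smat n :=
  fun j i => ustar (v (rev_ord i) (rev_ord j)).

Definition Mmat n (k : 'I_4) : smat n :=
  if (val k == 0)%N then umat n else if (val k == 1)%N then mtr (umat n)
  else if (val k == 2)%N then mstar (umat n) else mdag (umat n).
Definition inM n (v : smat n) : Prop :=
  v = umat n \/ v = mtr (umat n) \/ v = mstar (umat n) \/ v = mdag (umat n).

(* Elements of k<X> are represented by formal finite sums: lists of
   (coefficient, monomial); coef p m is the coefficient of the monomial m. *)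
Definition fpol (k : Type) n := seq (k * seq (sym n)).
Definition coef (k : fieldType) n (p : fpol k n) (m : seq (sym n)) : k :=
  \sum_(t <- p | t.2 == m) t.1.

Definition relpol (k : fieldType) n (v : smat n) (j i : 'I_n) : fpol k n :=
  [seq (1, [:: v j (rev_ord s); mdag v s (rev_ord i)]) | s <- enum 'I_n]
  ++ (if j == i then [:: (-1, [::])] else [::]).

Definition mulmon (k : fieldType) n (c : k) (a : seq (sym n)) (p : fpol k n)
  (b : seq (sym n)) : fpol k n :=
  [seq (c * t.1, a ++ t.2 ++ b) | t <- p].

(* A generic element of the two-sided ideal I: a finite sum
   sum_t c_t a_t rho_t b_t with rho_t in R. *)
Definition Ielt (k : fieldType) n
  (ts : seq (k * seq (sym n) * ('I_4 * 'I_n * 'I_n) * seq (sym n))) : fpol k n :=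
  flatten [seq let '(c, a, (q, j, i), b) := t in
               mulmon c a (@relpol k n (@Mmat n q) j i) b | t <- ts].

Definition srank n (x : sym n) : nat :=
  let '(b, j, i) := x in
  if b then (n * n - 1 - (j * n + i))%N else (n * n + (j * n + i))%N.

Fixpoint lexlt (s t : seq nat) : bool :=
  match s, t with
  | [::], _ :: _ => true
  | x :: s', y :: t' => (x < y)%N || ((x == y) && lexlt s' t')
  | _, _ => false
  end.

Definition mlt n (m m' : seq (sym n)) : bool :=
  (size m < size m')%N ||
  ((size m == size m') && lexlt (map (@srank n) m) (map (@srank n) m')).
Definition mle n (m m' : seq (sym n)) : bool := (m == m') || mlt m m'.

Definition TipI (k : fieldType) n (m : seq (sym n)) : Prop :=
  exists ts : seq (k * seq (sym n) * ('I_4 * 'I_n * 'I_n) * seq (sym n)),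
    coef (Ielt ts) m != 0 /\
             forall m', coef (Ielt ts) m' != 0 -> mle m' m.

Definition mgen n (G T : seq (sym n) -> Prop) : Prop :=
  forall m, T m <-> exists a g b, G g /\ m = a ++ g ++ b.

Definition min_mgen n (G T : seq (sym n) -> Prop) : Prop :=
  mgen G T /\
  forall G', (forall m, G' m -> G m) -> mgen G' T -> forall m, G m -> G' m.

Definition Sgen n (m : seq (sym n)) : Prop :=
  exists (v : smat n) (j i l f : 'I_n),
    inM v /\ val l = n.-1 /\ val f = 0%N /\
    m = [:: v j l; mdag v f (rev_ord i)].

(* Main.v *)
Require Import Defs.
From mathcomp Require Import all_boot all_order all_algebra.
From mathcomp Require Import zify ring.
Set Implicit Arguments. Unset Strict Implicit. Unset Printing Implicit Defensive.
Import GRing.Theory.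
Local Open Scope ring_scope.

Section Main.
Variable k : fieldType.
Variable n : nat.
Local Notation N := n.+2.
Local Notation word := (seq (sym N)).
Definition rule := ('I_4 * 'I_N * 'I_N)%type.

Definition T (r : rule) (s : 'I_N) : word :=
  let '(q, j, i) := r in
  [:: @Mmat N q j (rev_ord s); mdag (@Mmat N q) s (rev_ord i)].

Definition K := (2 * N * N).+1%N.
Definition codeL (l : seq nat) : nat :=
  foldl (fun acc r => acc * K + r.+1)%N 0%N l.
Definition code (w : word) := codeL (map (@srank N) w).

Lemma foldl_code acc l :
  foldl (fun acc r => acc * K + r.+1)%N acc l = (acc * K ^ size l + codeL l)%N.
Proof.
elim: l acc => [|r l IH] acc /=; first by rewrite expn0 muln1 /codeL /= addn0.
rewrite /codeL /= IH [X in (_ = _ + X)%N]IH expnS; lia.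
Qed.

Lemma codeL_cons r l : codeL (r :: l) = (r.+1 * K ^ size l + codeL l)%N.
Proof. by rewrite /codeL /= foldl_code. Qed.

Lemma codeL_cat s t : codeL (s ++ t) = (codeL s * K ^ size t + codeL t)%N.
Proof. by rewrite /codeL foldl_cat foldl_code. Qed.

Lemma srank_lt (x : sym N) : (srank x < 2 * N * N)%N.
Proof.
case: x => [[b j] i] /=; have := ltn_ord j; have := ltn_ord i.
case: b => Hi Hj; nia.
Qed.

Lemma codeL_ub l : all (fun r => r < 2 * N * N)%N l -> (codeL l < K ^ size l)%N.
Proof.
elim: l => [|r l IH] //= /andP[Hr Hl]; rewrite codeL_cons expnS.
have := IH Hl; rewrite /K; nia.
Qed.

Lemma all_srank (w : word) : all (fun r => r < 2 * N * N)%N (map (@srank N) w).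
Proof. by apply/allP => r /mapP[x _ ->]; apply: srank_lt. Qed.

Lemma code_ub w : (code w < K ^ size w)%N.
Proof. by rewrite /code -(size_map (@srank N)); apply: codeL_ub; apply: all_srank. Qed.

Lemma lexlt_code s t : all (fun r => r < 2 * N * N)%N s -> size s = size t ->
  lexlt s t -> (codeL s < codeL t)%N.
Proof.
elim: s t => [|x s IH] [|y t] //= /andP[Hx Hs] [Hst] /orP[Hxy|/andP[/eqP Exy Hl]].
- rewrite !codeL_cons Hst; have := codeL_ub Hs; rewrite Hst; nia.
- rewrite !codeL_cons Hst Exy ltn_add2l; exact: IH.
Qed.

Lemma code_mlt w w' : mlt w w' -> (code w < code w')%N.
Proof.
case/orP=> [Hs|/andP[/eqP Hs Hl]].
- case: w' Hs => [|y w'] //= Hs.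
  have := code_ub w; rewrite /code /= codeL_cons size_map.
  have: (K ^ size w <= K ^ size w')%N by rewrite leq_exp2l // /K; nia.
  nia.
- apply: lexlt_code; rewrite ?size_map //; exact: all_srank.
Qed.

Lemma mlt_irr (w : word) : ~~ mlt w w.
Proof. by apply/negP => /code_mlt; rewrite ltnn. Qed.

Lemma lexlt_cat p s t : lexlt (p ++ s) (p ++ t) = lexlt s t.
Proof. by elim: p => //= x p ->; rewrite ltnn eqxx. Qed.

Lemma mlt_del (a b : word) r : mlt (a ++ b) (a ++ T r ord0 ++ b).
Proof. by rewrite /mlt !size_cat; case: r => [[q j] i] /=; apply/orP; left; lia. Qed.


Lemma T0 (q : 'I_4) j i s : val q = 0%N ->
  T (q, j, i) s = [:: (false, j, rev_ord s); (true, i, rev_ord s)].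
Proof. by case: q => [[|[|[|[|q]]]] Hq] //= _; rewrite /mdag /= rev_ordK. Qed.
Lemma T1 (q : 'I_4) j i s : val q = 1%N ->
  T (q, j, i) s = [:: (false, rev_ord s, j); (true, rev_ord s, i)].
Proof. by case: q => [[|[|[|[|q]]]] Hq] //= _; rewrite /mdag /= rev_ordK. Qed.
Lemma T2 (q : 'I_4) j i s : val q = 2%N ->
  T (q, j, i) s = [:: (true, rev_ord j, s); (false, rev_ord i, s)].
Proof. by case: q => [[|[|[|[|q]]]] Hq] //= _; rewrite /Mmat /mdag /mstar /= !rev_ordK. Qed.
Lemma T3 (q : 'I_4) j i s : val q = 3%N ->
  T (q, j, i) s = [:: (true, s, rev_ord j); (false, s, rev_ord i)].
Proof. by case: q => [[|[|[|[|q]]]] Hq] //= _; rewrite /Mmat /mdag /= !rev_ordK. Qed.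

Lemma q_cases (q : 'I_4) : [\/ val q = 0%N, val q = 1%N, val q = 2%N | val q = 3%N].
Proof.
case: q => [[|[|[|[|q]]]] Hq] /=.
- by apply: Or41. - by apply: Or42. - by apply: Or43. - by apply: Or44. - by [].
Qed.

Lemma rank_dec (r : rule) s : s != ord0 ->
  (srank (head (true, ord0, ord0) (T r s)) < srank (head (true, ord0, ord0) (T r ord0)))%N.
Proof.
case: r => [[q j] i] Hs.
have Hs' := ltn_ord s; have Hj := ltn_ord j.
case: (q_cases q) => Hq; [rewrite !T0 //|rewrite !T1 //|rewrite !T2 //|rewrite !T3 //];
  move: Hs; rewrite -val_eqE /= => Hs; nia.
Qed.

Lemma mlt_rep (a b : word) r s : s != ord0 -> mlt (a ++ T r s ++ b) (a ++ T r ord0 ++ b).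
Proof.
move=> Hs; rewrite /mlt !size_cat; case E: r => [[q j] i].
apply/orP; right; apply/andP; split; first by [].
rewrite !map_cat lexlt_cat.
have := rank_dec (q, j, i) Hs.
by rewrite /T /= => ->.
Qed.

Definition lr (x y : sym N) : option rule := [pick r : rule | T r ord0 == [:: x; y]].

Fixpoint fr (w : word) : option (word * rule * word) :=
  match w with
  | x :: ((y :: w') as t) =>
      match lr x y with
      | Some r => Some ([::], r, w')
      | None => if fr t is Some (a, r, b) then Some (x :: a, r, b) else None
      end
  | _ => None
  end.

Lemma Tform r s : exists p q, T r s = [:: p; q].
Proof. by case: r => [[q j] i]; do 2 eexists. Qed.

Lemma lr_some x y r : lr x y = Some r -> T r ord0 = [:: x; y].
Proof. by rewrite /lr; case: pickP => // r1 /eqP H [<-]. Qed.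

Lemma lr_none x y r : lr x y = None -> T r ord0 <> [:: x; y].
Proof. by rewrite /lr; case: pickP => // /(_ r) H _ E; rewrite E eqxx in H. Qed.

Lemma fr_some w a r b : fr w = Some (a, r, b) -> w = a ++ T r ord0 ++ b.
Proof.
elim: w a r b => [|x w IH] a r b //=; case: w IH => [|y w] IH //.
case E: (lr x y) => [r0|].
- by case=> <- <- <-; rewrite (lr_some E).
- case E2: (fr (y :: w)) => [[[a0 r0] b0]|] //; case=> <- <- <-.
  by rewrite (IH _ _ _ E2).
Qed.

Lemma fr_min w a r b a' r' b' : fr w = Some (a, r, b) ->
  w = a' ++ T r' ord0 ++ b' -> (size a <= size a')%N.
Proof.
have [p [q Et]] := Tform r' ord0; rewrite Et.
elim: w a r b a' b' => [|x w IH] a r b a' b' //=; case: w IH => [|y w] IH //.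
case E: (lr x y) => [r0|].
- by case=> <- _ _.
case E2: (fr (y :: w)) => [[[a0 r0] b0]|] //; case=> <- _ _.
case: a' => [|c a'] /=.
- by case=> Ex Ey _; move: (lr_none (r:=r') E); rewrite Et Ex Ey.
- by case=> _ Ew; rewrite ltnS; apply: (IH _ _ _ _ b' E2).
Qed.

Lemma fr_none w : fr w = None -> forall a r b, w <> a ++ T r ord0 ++ b.
Proof.
move=> Hw a r b; have [p [q Et]] := Tform r ord0; rewrite Et.
elim: w a Hw => [|x w IH] a //=; first by case: a.
case: w IH => [|y w] IH.
- by case: a => [|? [|]].
case E: (lr x y) => [r0|] //.
case E2: (fr (y :: w)) => [[[a0 r0] b0]|] // _.
case: a => [|c a] /=.
- by case=> Ex Ey _; move: (lr_none (r:=r) E); rewrite Et Ex Ey.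
- by case=> _ Ew; apply: (IH a E2).
Qed.

Definition delta (r : rule) : k := (r.1.2 == r.2)%:R.

Fixpoint Nf (f : nat) (w : word) (m : word) : k :=
  match f with
  | 0 => 0
  | f'.+1 => match fr w with
     | None => (m == w)%:R
     | Some (a, r, b) => delta r * Nf f' (a ++ b) m
          - \sum_(s < N | s != ord0) Nf f' (a ++ T r s ++ b) m
     end
  end.

Definition NN w m := Nf (code w).+1 w m.
Definition R (r : rule) (a b : word) m :=
  delta r * NN (a ++ b) m - \sum_(s < N | s != ord0) NN (a ++ T r s ++ b) m.

Lemma code_del (a b : word) r : (code (a ++ b) < code (a ++ T r ord0 ++ b))%N.
Proof. exact/code_mlt/mlt_del. Qed.
Lemma code_rep (a b : word) r s : s != ord0 ->
  (code (a ++ T r s ++ b) < code (a ++ T r ord0 ++ b))%N.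
Proof. by move=> Hs; apply/code_mlt/mlt_rep. Qed.

Lemma Nf_stable f f' w m : (code w < f)%N -> (code w < f')%N -> Nf f w m = Nf f' w m.
Proof.
elim: f f' w => [|f IH] [|f'] w //= H1 H2.
case E: (fr w) => [[[a r] b]|] //.
have Ew := fr_some E.
congr (_ * _ - _).
- apply: IH; move: (code_del a b r); rewrite -Ew; lia.
- apply: eq_bigr => s Hs; apply: IH; move: (code_rep a b r Hs); rewrite -Ew; lia.
Qed.

Lemma NN_eq w m : NN w m =
  match fr w with None => (m == w)%:R | Some (a, r, b) => R r a b m end.
Proof.
rewrite /NN /=; case E: (fr w) => [[[a r] b]|] //.
have Ew := fr_some E; rewrite /R.
congr (_ * _ - _).
- apply: Nf_stable => //; move: (code_del a b r); rewrite -Ew; lia.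
- apply: eq_bigr => s Hs; apply: Nf_stable => //; move: (code_rep a b r Hs); rewrite -Ew; lia.
Qed.

Lemma NN_tri w m : NN w m != 0 -> (code m <= code w)%N.
Proof.
move: {2}(code w).+1 (ltnSn (code w)) => f; elim: f w => [|f IH] w // Hf.
rewrite NN_eq; case E: (fr w) => [[[a r] b]|]; last first.
  move=> H; suff -> : m = w by []; apply/eqP; apply: contraNT H => /negbTE ->; by rewrite eqxx.
have Ew := fr_some E; rewrite /R.
have [H0|] := eqVneq (NN (a ++ b) m) 0.
- rewrite H0 mulr0 sub0r oppr_eq0 => Hs.
  have [s Hs0 Hns] : exists2 s, s != ord0 & NN (a ++ T r s ++ b) m != 0.
    apply/exists_inP; apply: contraNT Hs => /exists_inPn Hs.
    by apply/eqP; apply: big1 => s /Hs /negPn /eqP.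
  have := code_rep a b r Hs0; rewrite -Ew => Hc.
  apply: leq_trans (ltnW Hc); apply: IH Hns; lia.
- move=> H1 _; have := code_del a b r; rewrite -Ew => Hc.
  apply: leq_trans (ltnW Hc); apply: IH H1; lia.
Qed.

Lemma NN_norm w : fr w = None -> NN w w = 1.
Proof. by move=> E; rewrite NN_eq E eqxx. Qed.

Definition resp (w : word) := forall a r b m, w = a ++ T r ord0 ++ b -> NN w m = R r a b m.
Definition below (w : word) := forall w', (code w' < code w)%N -> resp w'.

Lemma R2 r (x y b : word) m : R r (x ++ y) b m =
  delta r * NN (x ++ y ++ b) m - \sum_(s < N | s != ord0) NN (x ++ y ++ T r s ++ b) m.
Proof. by rewrite /R -catA; congr (_ - _); apply: eq_bigr => s _; rewrite -catA. Qed.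
Lemma R3 r (x y z b : word) m : R r (x ++ y ++ z) b m =
  delta r * NN (x ++ y ++ z ++ b) m - \sum_(s < N | s != ord0) NN (x ++ y ++ z ++ T r s ++ b) m.
Proof. by rewrite /R -!catA; congr (_ - _); apply: eq_bigr => s _; rewrite -!catA. Qed.

Lemma disj_case (a' c b : word) r' r m :
  below (a' ++ T r' ord0 ++ c ++ T r ord0 ++ b) ->
  R r' a' (c ++ T r ord0 ++ b) m = R r (a' ++ T r' ord0 ++ c) b m.
Proof.
move=> Hb.
have H1 : NN (a' ++ c ++ T r ord0 ++ b) m = R r (a' ++ c) b m.
  by apply: Hb (code_del a' (c ++ T r ord0 ++ b) r') _ _ _ _ _; rewrite catA.
have H2 : forall s', s' != ord0 ->
    NN (a' ++ T r' s' ++ c ++ T r ord0 ++ b) m = R r (a' ++ T r' s' ++ c) b m.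
  by move=> s' Hs'; apply: Hb (code_rep a' (c ++ T r ord0 ++ b) r' Hs') _ _ _ _ _; rewrite -!catA.
have H3 : NN (a' ++ T r' ord0 ++ c ++ b) m = R r' a' (c ++ b) m.
  apply: Hb _ _ _ _ _ (erefl _).
  by have := code_del (a' ++ T r' ord0 ++ c) b r; rewrite -!catA.
have H4 : forall s, s != ord0 ->
    NN (a' ++ T r' ord0 ++ c ++ T r s ++ b) m = R r' a' (c ++ T r s ++ b) m.
  move=> s Hs; apply: Hb _ _ _ _ _ (erefl _).
  by have := code_rep (a' ++ T r' ord0 ++ c) b r Hs; rewrite -!catA.
rewrite {1}/R H1 (eq_bigr _ H2).
rewrite [RHS]/R -!catA H3.
under [X in _ = _ - X]eq_bigr => s Hs do rewrite -!catA (H4 s Hs).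
rewrite R2; under eq_bigr => i _ do rewrite R3.
rewrite /R.
rewrite !sumrB -!mulr_sumr.
rewrite (exchange_big _ _ _ _ _ (fun s s' => NN (a' ++ T r' s' ++ c ++ T r s ++ b) m)).
ring.
Qed.

Lemma incl_gen (a b : word) r1 r2 g1 g2 m :
  T r1 ord0 = T r2 ord0 -> delta r1 = 1 -> delta r2 = 1 ->
  (forall s, s != ord0 -> T r1 s = T (g1 s) ord0 /\ delta (g1 s) = 1) ->
  (forall s, s != ord0 -> T r2 s = T (g2 s) ord0 /\ delta (g2 s) = 1) ->
  (forall s t, T (g1 s) t = T (g2 t) s) ->
  below (a ++ T r1 ord0 ++ b) -> R r1 a b m = R r2 a b m.
Proof.
move=> E12 D1 D2 H1 H2 Hg Hb.
have Hb2 : below (a ++ T r2 ord0 ++ b) by rewrite -E12.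
rewrite /R D1 D2; congr (_ - _).
under eq_bigr => s Hs.
  have [E Dg] := H1 s Hs.
  rewrite (Hb _ (code_rep a b r1 Hs) a (g1 s) b m); last by rewrite E.
  rewrite /R Dg.
over.
under [RHS]eq_bigr => s Hs.
  have [E Dg] := H2 s Hs.
  rewrite (Hb2 _ (code_rep a b r2 Hs) a (g2 s) b m); last by rewrite E.
  rewrite /R Dg.
  under eq_bigr => t _ do rewrite -Hg.
over.
rewrite !sumrB; congr (_ - _).
exact: exchange_big.
Qed.

Lemma sub3 (A S1 B S2 D : k) : A - S1 = B - S2 -> A - (S1 - D) = B - (S2 - D).
Proof.
move=> H; have -> : A - (S1 - D) = (A - S1) + D by ring.
by rewrite H; ring.
Qed.

Lemma ovl_gen (a b : word) r' r x y z h1 h2 xs zt m :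
  T r' ord0 = [:: x; y] -> T r ord0 = [:: y; z] ->
  (forall s, s != ord0 -> exists ys, T r' s = [:: xs s; ys] /\ T (h1 s) ord0 = [:: ys; z]) ->
  (forall t, t != ord0 -> exists yt, T r t = [:: yt; zt t] /\ T (h2 t) ord0 = [:: x; yt]) ->
  (forall s t, xs s :: T (h1 s) t = T (h2 t) s ++ [:: zt t]) ->
  delta r' * NN (a ++ z :: b) m
    - \sum_(s < N | s != ord0) delta (h1 s) * NN (a ++ xs s :: b) m =
  delta r * NN (a ++ x :: b) m
    - \sum_(t < N | t != ord0) delta (h2 t) * NN (a ++ zt t :: b) m ->
  below (a ++ [:: x; y; z] ++ b) -> R r' a (z :: b) m = R r (a ++ [:: x]) b m.
Proof.
move=> Er' Er H1 H2 Hc Hs Hb.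
have Hb1 : below (a ++ T r' ord0 ++ z :: b) by rewrite Er'.
have Hb2 : below ((a ++ [:: x]) ++ T r ord0 ++ b) by rewrite Er -catA.
rewrite /R.
under eq_bigr => s Hs0.
  have [ys [E1 E2]] := H1 s Hs0.
  rewrite (Hb1 _ (code_rep a (z :: b) r' Hs0) (a ++ [:: xs s]) (h1 s) b m);
    last by rewrite E1 E2 -catA.
  rewrite /R -catA cat1s.
  under eq_bigr => t _ do rewrite -catA cat1s -cat_cons Hc -catA cat1s.
over.
under [X in _ = _ - X]eq_bigr => t Ht0.
  have [yt [E1 E2]] := H2 t Ht0.
  rewrite (Hb2 _ (code_rep (a ++ [:: x]) b r Ht0) a (h2 t) (zt t :: b) m);
    last by rewrite E1 E2 -catA.
  rewrite /R.
over.
rewrite -!catA /= !sumrB.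
rewrite (exchange_big _ _ _ _ _ (fun s t => NN (a ++ T (h2 t) s ++ zt t :: b) m)).
exact: sub3 Hs.
Qed.

Definition Tc (r : rule) (s : 'I_N) : word :=
  let '(q, j, i) := r in
  match val q with
  | 0 => [:: (false, j, rev_ord s); (true, i, rev_ord s)]
  | 1 => [:: (false, rev_ord s, j); (true, rev_ord s, i)]
  | 2 => [:: (true, rev_ord j, s); (false, rev_ord i, s)]
  | _ => [:: (true, s, rev_ord j); (false, s, rev_ord i)]
  end%N.

Lemma T_Tc r s : T r s = Tc r s.
Proof.
case: r => [[q j] i]; case: (q_cases q) => Hq;
  [rewrite T0 //|rewrite T1 //|rewrite T2 //|rewrite T3 //]; by rewrite /Tc Hq.
Qed.

Definition Q0 : 'I_4 := @Ordinal 4 0 isT.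
Definition Q1 : 'I_4 := @Ordinal 4 1 isT.
Definition Q2 : 'I_4 := @Ordinal 4 2 isT.
Definition Q3 : 'I_4 := @Ordinal 4 3 isT.
Definition zz : 'I_N := rev_ord ord0.

Lemma incl01 (a b : word) m : below (a ++ T (Q0, zz, zz) ord0 ++ b) ->
  R (Q0, zz, zz) a b m = R (Q1, zz, zz) a b m.
Proof.
apply: (@incl_gen a b _ _ (fun s => (Q1, rev_ord s, rev_ord s)) (fun s => (Q0, rev_ord s, rev_ord s))).
- by rewrite !T_Tc.
- by rewrite /delta eqxx.
- by rewrite /delta eqxx.
- by move=> s _; rewrite !T_Tc /delta eqxx.
- by move=> s _; rewrite !T_Tc /delta eqxx.
- by move=> s t; rewrite !T_Tc.
Qed.

Lemma incl23 (a b : word) m : below (a ++ T (Q2, zz, zz) ord0 ++ b) ->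
  R (Q2, zz, zz) a b m = R (Q3, zz, zz) a b m.
Proof.
apply: (@incl_gen a b _ _ (fun s => (Q3, rev_ord s, rev_ord s)) (fun s => (Q2, rev_ord s, rev_ord s))).
- by rewrite !T_Tc /= /zz !rev_ordK.
- by rewrite /delta eqxx.
- by rewrite /delta eqxx.
- by move=> s _; rewrite !T_Tc /delta eqxx /= /zz !rev_ordK.
- by move=> s _; rewrite !T_Tc /delta eqxx /= /zz !rev_ordK.
- by move=> s t; rewrite !T_Tc /= !rev_ordK.
Qed.

Lemma val_rev (j : 'I_N) : nat_of_ord (rev_ord j) = (N - j.+1)%N.
Proof. by []. Qed.

Lemma val_ord0 : nat_of_ord (ord0 : 'I_N) = 0%N. Proof. by []. Qed.
Lemma val_ord0' : val (ord0 : 'I_N) = 0%N. Proof. by []. Qed.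

Lemma ord_eqn (x y : 'I_N) : nat_of_ord x = nat_of_ord y -> x = y.
Proof. exact: val_inj. Qed.

Lemma letter_eq (b b' : bool) (j i j' i' : 'I_N) :
  (((b, j, i) : sym N) == (b', j', i')) =
  [&& b == b', nat_of_ord j == nat_of_ord j' & nat_of_ord i == nat_of_ord i'].
Proof. by rewrite !xpair_eqE andbA. Qed.

Lemma incl_case (a b : word) r' r m : T r' ord0 = T r ord0 ->
  below (a ++ T r ord0 ++ b) -> R r' a b m = R r a b m.
Proof.
case: r' => [[q' j'] i']; case: r => [[q j] i] E Hb.
move/eqP: (E); rewrite !T_Tc.
case: q' E Hb => [[|[|[|[|q']]]] Hq'] //; case: q => [[|[|[|[|q]]]] Hq] // E Hb;
  rewrite /= !eqseq_cons !letter_eq ?andbT ?val_rev ?eqxx ?andTb ?andbT ?val_ord0 ?val_ord0' => H.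
all: try by [].
all: have Hj := ltn_ord j; have Hj' := ltn_ord j'; have Hi := ltn_ord i; have Hi' := ltn_ord i'.
all: try ((have Eq : Ordinal Hq' = Ordinal Hq by apply: val_inj);
  (have Ej : j' = j by apply: ord_eqn; lia);
  (have Ei : i' = i by apply: ord_eqn; lia);
  by rewrite Eq Ej Ei).
all: have Ej : j = zz by apply: ord_eqn; rewrite /zz val_rev val_ord0; lia.
all: have Ej' : j' = zz by apply: ord_eqn; rewrite /zz val_rev val_ord0; lia.
all: have Ei : i = zz by apply: ord_eqn; rewrite /zz val_rev val_ord0; lia.
all: have Ei' : i' = zz by apply: ord_eqn; rewrite /zz val_rev val_ord0; lia.
all: subst j j' i i'.
all: try (have -> : Ordinal Hq' = Q0 by apply: val_inj); try (have -> : Ordinal Hq' = Q1 by apply: val_inj);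
     try (have -> : Ordinal Hq' = Q2 by apply: val_inj); try (have -> : Ordinal Hq' = Q3 by apply: val_inj).
all: try (have EE : Ordinal Hq = Q0 by apply: val_inj); try (have EE : Ordinal Hq = Q1 by apply: val_inj);
     try (have EE : Ordinal Hq = Q2 by apply: val_inj); try (have EE : Ordinal Hq = Q3 by apply: val_inj).
all: rewrite EE in E Hb *.
- by apply: incl01; move: Hb; rewrite !T_Tc.
- by symmetry; apply: incl01.
- by apply: incl23; move: Hb; rewrite !T_Tc /= /zz !rev_ordK.
- by symmetry; apply: incl23.
Qed.

Lemma sum_delta (i : 'I_N) (G : 'I_N -> k) :
  \sum_(s < N | s != ord0) (s == i)%:R * G s = (i != ord0)%:R * G i.
Proof.
case: (eqVneq i ord0) => [->|Hi].
- by rewrite mul0r big1 // => s /negbTE ->; rewrite mul0r.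
- rewrite (bigD1 i) //= eqxx mul1r big1 ?addr0 ?mul1r // => s /andP[_ /negbTE ->].
  by rewrite mul0r.
Qed.

Lemma sum_delta' (i : 'I_N) (G : 'I_N -> k) :
  \sum_(s < N | s != ord0) (i == s)%:R * G s = (i != ord0)%:R * G i.
Proof. by under eq_bigr do rewrite eq_sym; apply: sum_delta. Qed.

Ltac fin_delta j i2 :=
  rewrite ?sum_delta ?sum_delta' /zz ?(eq_sym ord0);
  case: (eqVneq j ord0) => [->|_]; case: (eqVneq i2 ord0) => [->|_];
  rewrite ?eqxx /=; ring.

Lemma ovl1 (a b : word) (j i2 : 'I_N) m :
  below (a ++ [:: (false, j, zz); (true, ord0, zz); (false, ord0, rev_ord i2)] ++ b) ->
  R (Q0, j, ord0) a ((false, ord0, rev_ord i2) :: b) m =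
  R (Q3, ord0, i2) (a ++ [:: (false, j, zz)]) b m.
Proof.
apply: (@ovl_gen a b _ _ _ _ _ (fun s => (Q3, s, i2)) (fun t => (Q0, j, t))
  (fun s => (false, j, rev_ord s)) (fun t => (false, t, rev_ord i2))).
- by rewrite T_Tc.
- by rewrite T_Tc.
- by move=> s _; rewrite !T_Tc; eexists.
- by move=> s _; rewrite !T_Tc; eexists.
- by move=> s t; rewrite !T_Tc.
- rewrite /delta /=; fin_delta j i2.
Qed.

Lemma ovl2 (a b : word) (j i2 : 'I_N) m :
  below (a ++ [:: (false, zz, j); (true, zz, ord0); (false, rev_ord i2, ord0)] ++ b) ->
  R (Q1, j, ord0) a ((false, rev_ord i2, ord0) :: b) m =
  R (Q2, ord0, i2) (a ++ [:: (false, zz, j)]) b m.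
Proof.
apply: (@ovl_gen a b _ _ _ _ _ (fun s => (Q2, s, i2)) (fun t => (Q1, j, t))
  (fun s => (false, rev_ord s, j)) (fun t => (false, rev_ord i2, t))).
- by rewrite T_Tc.
- by rewrite T_Tc.
- by move=> s _; rewrite !T_Tc; eexists.
- by move=> s _; rewrite !T_Tc; eexists.
- by move=> s t; rewrite !T_Tc.
- rewrite /delta /=; fin_delta j i2.
Qed.

Lemma ovl3 (a b : word) (j i2 : 'I_N) m :
  below (a ++ [:: (true, rev_ord j, ord0); (false, zz, ord0); (true, zz, i2)] ++ b) ->
  R (Q2, j, ord0) a ((true, zz, i2) :: b) m =
  R (Q1, ord0, i2) (a ++ [:: (true, rev_ord j, ord0)]) b m.
Proof.
apply: (@ovl_gen a b _ _ _ _ _ (fun s => (Q1, s, i2)) (fun t => (Q2, j, t))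
  (fun s => (true, rev_ord j, s)) (fun t => (true, rev_ord t, i2))).
- by rewrite T_Tc.
- by rewrite T_Tc.
- by move=> s _; rewrite !T_Tc; eexists.
- by move=> s _; rewrite !T_Tc; eexists.
- by move=> s t; rewrite !T_Tc.
- rewrite /delta /=; fin_delta j i2.
Qed.

Lemma ovl4 (a b : word) (j i2 : 'I_N) m :
  below (a ++ [:: (true, ord0, rev_ord j); (false, ord0, zz); (true, i2, zz)] ++ b) ->
  R (Q3, j, ord0) a ((true, i2, zz) :: b) m =
  R (Q0, ord0, i2) (a ++ [:: (true, ord0, rev_ord j)]) b m.
Proof.
apply: (@ovl_gen a b _ _ _ _ _ (fun s => (Q0, s, i2)) (fun t => (Q3, j, t))
  (fun s => (true, s, rev_ord j)) (fun t => (true, i2, rev_ord t))).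
- by rewrite T_Tc.
- by rewrite T_Tc.
- by move=> s _; rewrite !T_Tc; eexists.
- by move=> s _; rewrite !T_Tc; eexists.
- by move=> s t; rewrite !T_Tc.
- rewrite /delta /=; fin_delta j i2.
Qed.

Lemma ovl_case (a b : word) r' r x y z m : T r' ord0 = [:: x; y] -> T r ord0 = [:: y; z] ->
  below (a ++ [:: x; y; z] ++ b) -> R r' a (z :: b) m = R r (a ++ [:: x]) b m.
Proof.
case: r' => [[q' j'] i']; case: r => [[q j] i]; rewrite !T_Tc.
case: q' => [[|[|[|[|q']]]] Hq'] //; case: q => [[|[|[|[|q]]]] Hq] //= [Ex Ey] [Ey' Ez];
  subst x y z; move/eqP: Ey'; rewrite letter_eq ?val_rev ?val_ord0 /= => H Hb.
all: try by [].
all: try (exfalso; lia).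
all: have Hj := ltn_ord j; have Hi' := ltn_ord i'.
all: (have Ej : j = ord0 by apply: ord_eqn; rewrite val_ord0; lia);
     (have Ei : i' = ord0 by apply: ord_eqn; rewrite val_ord0; lia); subst j i'.
- have -> : Ordinal Hq' = Q0 by apply: val_inj.
  have -> : Ordinal Hq = Q3 by apply: val_inj.
  exact: (@ovl1 a b j' i m Hb).
- have -> : Ordinal Hq' = Q1 by apply: val_inj.
  have -> : Ordinal Hq = Q2 by apply: val_inj.
  exact: (@ovl2 a b j' i m Hb).
- have -> : Ordinal Hq' = Q2 by apply: val_inj.
  have -> : Ordinal Hq = Q1 by apply: val_inj.
  exact: (@ovl3 a b j' i m Hb).
- have -> : Ordinal Hq' = Q3 by apply: val_inj.
  have -> : Ordinal Hq = Q0 by apply: val_inj.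
  exact: (@ovl4 a b j' i m Hb).
Qed.

Lemma resp_all w : resp w.
Proof.
move: {2}(code w).+1 (ltnSn (code w)) => f; elim: f w => [|f IH] w // Hf.
have Hb : below w by move=> w' Hw'; apply: IH; lia.
move=> a r b m Ew.
case E: (fr w) => [[[a' r'] b']|]; last by case: (fr_none E Ew).
rewrite NN_eq E.
have Ew' := fr_some E.
have Hs := fr_min E Ew.
have Ha : a = a' ++ drop (size a') a.
  have Ht : take (size a') w = a' by rewrite Ew' take_size_cat.
  rewrite -{1}(cat_take_drop (size a') a); congr (_ ++ _).
  by move: Ht; rewrite Ew takel_cat.
move: Ew; rewrite Ha Ew' -catA => /eqP; rewrite eqseq_cat // => /andP[_ /eqP Erest].
move: Hb; rewrite Ew' => Hb.
have [p [q Ep]] := Tform r' ord0; have [p2 [q2 Ep2]] := Tform r ord0.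
move: (drop _ _) Ha Erest => d Ha Erest; clear Hs; subst a.
move: Erest Hb; rewrite Ep Ep2.
case: d => [|x [|x2 c]] /=.
- case=> Hp Hq Hbb; subst p2 q2 b' => Hb; rewrite cats0.
  by apply: incl_case; [rewrite Ep Ep2|rewrite Ep2].
- case=> Hp Hq Hbb; subst x p2 b' => Hb.
  exact: ovl_case Ep Ep2 Hb.
- case=> Hp Hq Hbb; subst x x2 b' => Hb.
  have := @disj_case a' c b r' r m; rewrite Ep Ep2; apply; exact: Hb.
Qed.

Lemma sum_zero_gen (p : fpol k N) (G : word -> k) :
  (forall w, coef p w != 0 -> G w = 0) -> \sum_(t <- p) t.1 * G t.2 = 0.
Proof.
move: {2}(size p).+1 (ltnSn (size p)) => f; elim: f p => [|f IH] p // Hf HG.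
case: p Hf HG => [|t0 p'] Hf HG; first by rewrite big_nil.
rewrite (bigID (fun t => t.2 == t0.2)) /=.
have -> : \sum_(t <- t0 :: p' | true && (t.2 == t0.2)) t.1 * G t.2
    = coef (t0 :: p') t0.2 * G t0.2.
  by rewrite /coef mulr_suml; apply: eq_big => [t|t /eqP ->] //.
have -> : coef (t0 :: p') t0.2 * G t0.2 = 0.
  by case: (eqVneq (coef (t0 :: p') t0.2) 0) => [->|/HG ->]; rewrite ?mul0r ?mulr0.
rewrite add0r -big_filter.
apply: IH.
- rewrite /= eqxx /= size_filter; apply: leq_ltn_trans (count_size _ _) _.
  simpl in Hf; lia.
- move=> w Hw; apply: HG; move: Hw; rewrite /coef big_filter_cond.
  case: (eqVneq w t0.2) => [->|Hne].
  + by rewrite big1 ?eqxx // => t /andP[/negbTE ->].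
  + rewrite (eq_bigl (fun t => t.2 == w)) // => t /=.
    by case: (eqVneq t.2 w) => [->|]; rewrite ?Hne ?andbF.
Qed.

Lemma NF_rel (c : k) (a b : word) (q : 'I_4) (j i : 'I_N) m :
  \sum_(t <- mulmon c a (@relpol k N (@Mmat N q) j i) b) t.1 * NN t.2 m = 0.
Proof.
rewrite /mulmon big_map /relpol big_cat big_map /= big_enum /=.
rewrite (bigD1 ord0) //=.
have E0 : NN (a ++ T (q, j, i) ord0 ++ b) m = R (q, j, i) a b m by apply: resp_all.
rewrite [X in c * 1 * X + _]E0 /R /delta /=.
rewrite -mulr_sumr.
case: (j == i); rewrite /= ?big_cons ?big_nil /=; ring.
Qed.

Lemma NF_Ielt (ts : seq (k * word * rule * word)) m :
  \sum_(t <- Ielt ts) t.1 * NN t.2 m = 0.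
Proof.
rewrite /Ielt big_flatten big_map big1 // => [[[[c a] [[q j] i]] b]] _ /=.
exact: NF_rel.
Qed.

Definition hasS (m : word) := exists a r b, m = a ++ T r ord0 ++ b.

Lemma tip_hasS m : TipI k m -> hasS m.
Proof.
case=> ts [Hm Hmax].
case E: (fr m) => [[[a r] b]|]; first by exists a, r, b; apply: fr_some.
exfalso; move/negP: Hm; apply.
have H0 := NF_Ielt ts m.
set p := Ielt ts in Hmax H0 *.
have HG : \sum_(t <- p) t.1 * (NN t.2 m - (t.2 == m)%:R) = 0.
  apply: (@sum_zero_gen p (fun w => NN w m - (w == m)%:R)) => w Hw.
  case: (eqVneq w m) => [->|Hne]; first by rewrite /= NN_norm // subrr.
  have Hlt : mlt w m by move: (Hmax w Hw); rewrite /mle (negbTE Hne).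
  have Hc := code_mlt Hlt.
  rewrite /= subr0; apply/eqP; rewrite -[_ == _]negbK; apply/negP => /NN_tri.
  by rewrite leqNgt Hc.
move: HG; under eq_bigr do rewrite mulrBr.
rewrite sumrB H0 sub0r => /eqP; rewrite oppr_eq0 => /eqP HG.
apply/eqP; rewrite /coef big_mkcond -[RHS]HG; apply: eq_bigr => t _.
by case: (t.2 == m); rewrite ?mulr1 ?mulr0.
Qed.

Lemma hasS_tip m : hasS m -> TipI k m.
Proof.
case=> a [[[q j] i] [b Em]].
exists [:: (1, a, (q, j, i), b)].
set p := Ielt _.
have Hp : p = mulmon 1 a (@relpol k N (@Mmat N q) j i) b by rewrite /p /Ielt /= cats0.
have HA : forall t, t \in p -> t.2 = m \/ mlt t.2 m.
  move=> t; rewrite Hp /mulmon /relpol map_cat mem_cat => /orP[|].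
  - case/mapP => u /mapP [s _ ->] -> /=.
    case: (eqVneq s ord0) => [->|Hs]; [left|right]; rewrite Em //.
    exact: (@mlt_rep a b (q, j, i) s Hs).
  - case: (j == i) => //; rewrite inE => /eqP -> /=.
    by right; rewrite Em; exact: (mlt_del a b (q, j, i)).
have HB : coef p m = 1.
  rewrite /coef Hp /mulmon big_map /relpol big_cat big_map /= big_enum_cond /=.
  rewrite (bigD1 ord0) /=; last by rewrite Em.
  rewrite big1 ?addr0; last first.
    move=> s /andP[Hs Hne]; exfalso; move: Hs; rewrite Em => /eqP E'.
    have := @mlt_rep a b (q, j, i) s Hne; rewrite /T E' => H.
    by move: (mlt_irr (a ++ T (q, j, i) ord0 ++ b)); rewrite /T H.
  have Hd : (a ++ [::] ++ b == m) = false.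
    apply/negbTE; apply/eqP => E'; have := mlt_del a b (q, j, i).
    by rewrite -Em -E' /= (negbTE (mlt_irr _)).
  by case: (j == i); rewrite /= ?big_cons ?big_nil /= ?Hd ?addr0 mulr1.
split; first by rewrite HB oner_neq0.
move=> m' Hm'.
have [t Ht Et] : exists2 t, t \in p & t.2 = m'.
  have : has (fun t => t.2 == m') p.
    apply: contraR Hm' => /hasPn H; apply/eqP; rewrite /coef big1_seq // => t /andP[E1 E2].
    by move: (H t E2); rewrite E1.
  by case/hasP => t Ht /eqP Et; exists t.
by case: (HA t Ht) => E; rewrite /mle -Et E ?eqxx ?orbT.
Qed.

Lemma Sgen_T (m : word) : Sgen m <-> exists r, m = T r ord0.
Proof.
split.
- case=> v [j [i [l [f [Hv [Hl [Hf ->]]]]]]].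
  have El : l = rev_ord ord0 by apply: ord_eqn; rewrite val_rev val_ord0; move: Hl => /= ->; lia.
  have Ef : f = ord0 by apply: val_inj.
  subst l f.
  by case: Hv => [->|[->|[->|->]]];
    [exists (Q0, j, i)|exists (Q1, j, i)|exists (Q2, j, i)|exists (Q3, j, i)].
- case=> [[[q j] i] ->].
  exists (@Mmat N q), j, i, (rev_ord ord0), ord0; split; last first.
    by split; [rewrite /=; lia|split].
  rewrite /inM; case: q => [[|[|[|[|q]]]] Hq] //=.
  + by left.
  + by right; left.
  + by right; right; left.
  + by right; right; right.
Qed.

Lemma main_N :
  (forall G : seq (sym N) -> Prop,
     min_mgen G (@TipI k N) <-> (forall m, G m <-> Sgen m)) /\
  (forall x : sym N, ~ TipI k [:: x]).
Proof.
have Tip : forall m : word, TipI k m <-> exists a g b, Sgen g /\ m = a ++ g ++ b.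
  move=> m; split.
  - move=> H; have [a [r [b Em]]] := tip_hasS H; exists a, (T r ord0), b; split => //.
    by apply/Sgen_T; exists r.
  - case=> a [g [b [/Sgen_T [r ->] ->]]]; apply: hasS_tip; by exists a, r, b.
have Ssz : forall g : word, Sgen g -> size g = 2%N.
  by move=> g /Sgen_T [r ->]; case: r => [[? ?] ?].
have Tsz : forall m : word, TipI k m -> (2 <= size m)%N.
  by move=> m /Tip [a [g [b [/Ssz Hg ->]]]]; rewrite !size_cat Hg; lia.
have Sfac : forall a g b : word, size (a ++ g ++ b) = size g -> a = [::] /\ b = [::].
  by move=> a g b; rewrite !size_cat => H; split; apply/size0nil; lia.
split; last by move=> x /Tsz.
move=> G; split.
- case=> Hgen Hmin.
  have GT : forall g : word, G g -> TipI k g.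
    by move=> g Hg; apply/Hgen; exists [::], g, [::]; rewrite cats0.
  have SG : forall m : word, Sgen m -> G m.
    move=> m Hm; have : TipI k m by apply/Tip; exists [::], m, [::]; rewrite cats0.
    case/Hgen => a [g [b [Hg Em]]].
    have H1 := Tsz _ (GT _ Hg); have H2 := Ssz _ Hm.
    have [Ha Hb] : a = [::] /\ b = [::].
      by apply: (Sfac a g b); move: H2; rewrite Em !size_cat => H2; lia.
    by subst a b; move: Em; rewrite cats0 /= => ->.
  move=> m; split; last exact: SG.
  move=> Gm.
  have HG' : mgen (fun m => G m /\ Sgen m) (@TipI k N).
    move=> m'; split.
    + move/Tip => [a [g [b [Sg E]]]]; exists a, g, b; split => //; split => //; exact: SG.
    + case=> a [g [b [[Gg _] E]]]; apply/Hgen; by exists a, g, b.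
  by case: (Hmin (fun m => G m /\ Sgen m) (fun m => @proj1 _ _) HG' m Gm).
- move=> HG; split.
  + move=> m; split.
    * move/Tip => [a [g [b [Sg E]]]]; exists a, g, b; split => //; exact/HG.
    * case=> a [g [b [Gg E]]]; apply/Tip; exists a, g, b; split => //; exact/HG.
  + move=> G' HG'G HG' m Gm.
    have : TipI k m by apply/Tip; exists [::], m, [::]; split; [exact/HG|by rewrite cats0].
    case/HG' => a [g [b [G'g Em]]].
    have Sg := Ssz _ (proj1 (HG g) (HG'G g G'g)).
    have Sm := Ssz _ (proj1 (HG m) Gm).
    have [Ha Hb] : a = [::] /\ b = [::] by apply: (Sfac a g b); rewrite -Em Sm Sg.
    by subst a b; move: Em; rewrite cats0 /= => ->.
Qed.

End Main.

Theorem proposition4p1 (k : fieldType) (n : nat) (hn : (2 <= n)%N) :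
  (forall G : seq (sym n) -> Prop,
     min_mgen G (@TipI k n) <-> (forall m, G m <-> Sgen m)) /\
  (forall x : sym n, ~ TipI k [:: x]).
Proof.
case: n hn => [|[|n]] // _.
exact: main_N.
Qed.
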